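(* Let $0<\lambda<1/e$ and $E(z)=\lambda e^z$. For every $r>0$, $\lim_{x\to\infty}L^r(x)/x=0$. Moreover, for all $s>r\ge 0$... more precisely for all real $s>r>0$ and every $\gamma>0$, $\lim_{x\to\infty}\bigl(L^s(x)\bigr)^\gamma/L^r(x)=0$.
   Context: For $0<\lambda<1/e$, $E(z)=\lambda e^z$ has real fixed points $\alpha<1<\beta$ with $E'(\beta)=\beta$. $S$ is the entire solution of Schröder's equation $S(\beta z)=E(S(z))$ with $S(0)=\beta$, $S'(0)=1$; it is real and strictly increasing on $\mathbb R$ and maps $\mathbb R$ bijectively onto $(\alpha,\infty)$. For $r\in\mathbb R$ the fractional iterate $E^r:[\alpha,\infty)\to[\alpha,\infty)$ is $E^r(\alpha)=\alpha$, $E^r(x)=S(\beta^rS^{-1}(x))$ for $x>\alpha$; $L^r=E^{-r}$, so $L(x)=\log x-\log\lambda$. *)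

(* Defs.v *)
From Stdlib Require Import Reals Lra.
Open Scope R_scope.

Definition lim_at_infty (f : R -> R) (l : R) : Prop :=
  forall eps, eps > 0 -> exists M, forall x, x > M -> Rabs (f x - l) < eps.

(* Fractional iterate E^r on [alpha, +oo): E^r(alpha) = alpha,
   E^r(x) = S(beta^r S^{-1}(x)) for x > alpha. *)
Definition Efrac (alpha beta : R) (S Sinv : R -> R) (r x : R) : R :=
  if Rle_dec x alpha then alpha else S (Rpower beta r * Sinv x).

Definition Lfrac (alpha beta : R) (S Sinv : R -> R) (r x : R) : R :=
  Efrac alpha beta S Sinv (- r) x.

(* Main.v *)
Require Import Defs.
From Stdlib Require Import Reals Lra Lia.
Open Scope R_scope.

Lemma pow_big q Y : 1 < q -> exists n, Y < q ^ n.
Proof.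
  intros Hq. destruct (INR_unbounded (Y / (q - 1))) as [n Hn].
  exists n. pose proof (poly n (q - 1) ltac:(lra)) as P.
  replace (1 + (q - 1)) with q in P by ring.
  assert (Y < INR n * (q - 1)).
  { assert (Y / (q-1) * (q-1) = Y) by (field; lra).
    assert (0 <= INR n) by apply pos_INR. nra. }
  lra.
Qed.

Lemma bracket q v : 1 < q -> 1 <= v -> exists j, q ^ j <= v < q ^ (S j).
Proof.
  intros Hq Hv. destruct (pow_big q v Hq) as [n Hn].
  revert Hn. induction n as [|n IH]; intros Hn.
  - simpl in Hn. lra.
  - destruct (Rlt_le_dec v (q ^ n)) as [H|H].
    + apply IH; exact H.
    + exists n. split; assumption.
Qed.

Lemma min_pos (d : nat -> R) n : (forall i, 0 < d i) ->
  exists del, 0 < del /\ forall i, (i <= n)%nat -> del <= d i.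
Proof.
  intros Hd. induction n as [|n IH].
  - exists (d 0%nat). split; [apply Hd|]. intros i Hi.
    replace i with 0%nat by lia. lra.
  - destruct IH as [del [Hdel H]]. exists (Rmin del (d (S n))). split.
    + apply Rmin_case; auto.
    + intros i Hi. destruct (Nat.eq_dec i (S n)) as [->|Hne].
      * apply Rmin_r.
      * eapply Rle_trans; [apply Rmin_l|]. apply H. lia.
Qed.

Lemma growth (lam beta : R) (S : R -> R) (Hlam : 0 < lam) (Hb : 1 < beta)
  (HS0 : S 0 = beta) (Heq : forall z, S (beta * z) = lam * exp (S z))
  (Hinc : forall z w, z < w -> S z < S w) (rho : R) (Hr : 0 < rho)
  (eps : R) (He : 0 < eps) :
  exists M, forall v, M < v -> S (Rpower beta (- rho) * v) <= eps * S v.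
Proof.
  assert (Hle : forall z w, z <= w -> S z <= S w).
  { intros z w [H|H]; [left; auto | right; subst; auto]. }
  destruct (INR_unbounded (2 / rho)) as [N HN].
  assert (HNpos : 0 < INR N).
  { assert (0 < 2 / rho) by (unfold Rdiv; apply Rmult_lt_0_compat; [lra| apply Rinv_0_lt_compat; lra]). lra. }
  assert (HN0 : N <> 0%nat) by (intro; subst; simpl in HNpos; lra).
  set (q := Rpower beta (/ INR N)).
  assert (Hq1 : 1 < q).
  { unfold q. rewrite <- (Rpower_O beta) by lra. apply Rpower_lt; [lra|].
    apply Rinv_0_lt_compat; lra. }
  assert (HqN : q ^ N = beta).
  { rewrite <- Rpower_pow by lra. unfold q. rewrite Rpower_mult, Rinv_l by lra.
    apply Rpower_1; lra. }
  set (c := Rpower beta (- rho)).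
  assert (Hcpos : 0 < c) by (unfold c, Rpower; apply exp_pos).
  assert (Hcq : c * q ^ 2 <= 1).
  { rewrite <- Rpower_pow by lra. unfold q, c. rewrite Rpower_mult, <- Rpower_plus.
    rewrite <- (Rpower_O beta) by lra. apply Rle_Rpower; [lra|].
    replace (INR 2) with 2 by (simpl; ring).
    assert (2 < rho * INR N).
    { assert (2 / rho * rho = 2) by (field; lra). nra. }
    assert (/ INR N * 2 * INR N = 2) by (field; lra).
    assert (/ INR N * 2 < rho).
    { apply Rmult_lt_reg_r with (INR N); lra. }
    lra. }
  set (a := fun j => S (q ^ j)).
  set (d := fun j => a (Datatypes.S j) - a j).
  assert (Hqp : forall j, 0 < q ^ j) by (intro; apply pow_lt; lra).
  assert (Hab : forall j, beta < a j).
  { intro j. unfold a. rewrite <- HS0. apply Hinc. apply Hqp. }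
  assert (HaN : forall j, a (j + N)%nat = lam * exp (a j)).
  { intro j. unfold a. rewrite pow_add, Rmult_comm, HqN. apply Heq. }
  assert (Hdpos : forall j, 0 < d j).
  { intro j. unfold d, a. assert (q ^ j < q ^ Datatypes.S j).
    { simpl. pose proof (Hqp j). nra. }
    pose proof (Hinc _ _ H). lra. }
  assert (Hdrec : forall j, beta * d j <= d (j + N)%nat).
  { intro j. unfold d at 2.
    replace (Datatypes.S (j + N)) with (Datatypes.S j + N)%nat by lia.
    rewrite !HaN. replace (a (Datatypes.S j)) with (a j + d j) by (unfold d; ring).
    rewrite exp_plus.
    pose proof (HaN j) as H1. pose proof (Hab (j + N)%nat) as H2.
    pose proof (exp_ineq1 (d j) ltac:(pose proof (Hdpos j); lra)) as H3.
    pose proof (Hdpos j).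
    set (X := lam * exp (a j)) in *. 
    replace (lam * (exp (a j) * exp (d j))) with (X * exp (d j)) by (unfold X; ring).
    nra. }
  destruct (min_pos d N Hdpos) as [del [Hdel Hmin]].
  assert (Hk : forall k i, (i <= N)%nat -> beta ^ k * del <= d (i + k * N)%nat).
  { induction k as [|k IH]; intros i Hi.
    - simpl. replace (i + 0)%nat with i by lia. rewrite Rmult_1_l. auto.
    - replace (i + Datatypes.S k * N)%nat with ((i + k * N) + N)%nat by lia.
      eapply Rle_trans; [|apply Hdrec]. simpl.
      pose proof (IH i Hi). nra. }
  assert (Hdbig : forall Y, exists J, forall j, (J <= j)%nat -> Y <= d j).
  { intro Y. destruct (INR_unbounded (Y / ((beta - 1) * del))) as [K HK].
    exists (N * K)%nat. intros j Hj.
    set (k := (j / N)%nat). set (i := (j mod N)%nat).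
    assert (Hji : j = (i + k * N)%nat) by (pose proof (Nat.div_mod_eq j N); unfold i, k; lia).
    assert (Hi : (i < N)%nat) by (apply Nat.mod_upper_bound; auto).
    clearbody k i. subst j.
    assert (HkK : (K <= k)%nat) by nia.
    pose proof (Hk k i ltac:(lia)) as H1.
    pose proof (poly k (beta - 1) ltac:(lra)) as P.
    replace (1 + (beta - 1)) with beta in P by ring.
    pose proof (le_INR _ _ HkK) as H2.
    assert (Y / ((beta - 1) * del) * ((beta - 1) * del) = Y) by (field; lra).
    assert (0 < (beta - 1) * del) by nra.
    nra. }
  assert (Hratio : forall e, 0 < e -> exists J, forall m, (J <= m)%nat -> a m <= e * a (Datatypes.S m)).
  { intros e He'. destruct (Hdbig (1 / e)) as [J0 HJ0].
    exists (J0 + N)%nat. intros m Hm.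
    replace m with ((m - N) + N)%nat by lia.
    replace (Datatypes.S (m - N + N)) with (Datatypes.S (m - N) + N)%nat by lia.
    set (j := (m - N)%nat). assert (HJ : (J0 <= j)%nat) by (unfold j; lia).
    clearbody j. rewrite !HaN.
    replace (a (Datatypes.S j)) with (a j + d j) by (unfold d; ring).
    rewrite exp_plus.
    pose proof (HJ0 j HJ). pose proof (Hdpos j).
    pose proof (exp_ineq1 (d j) ltac:(lra)).
    assert (e * (1 / e) = 1) by (field; lra).
    pose proof (exp_pos (a j)).
    assert (0 < lam * exp (a j)) by nra.
    assert (1 <= e * exp (d j)) by nra.
    nra. }
  destruct (Hratio eps He) as [J HJ].
  exists (q ^ (J + 2)). intros v Hv.
  assert (H1v : 1 <= v) by (pose proof (pow_R1_Rle q (J + 2) ltac:(lra)); lra).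
  destruct (bracket q v Hq1 H1v) as [j [Hj1 Hj2]].
  assert (HjJ : (J + 2 <= j)%nat).
  { destruct (Compare_dec.le_lt_dec (J + 2) j) as [|Hlt]; auto.
    pose proof (Rle_pow q (Datatypes.S j) (J + 2) ltac:(lra) ltac:(lia)). lra. }
  destruct j as [|m]; [lia|].
  assert (Hcv : c * v < q ^ m).
  { assert (c * v < c * q ^ (Datatypes.S (Datatypes.S m))) by (apply Rmult_lt_compat_l; auto).
    replace (q ^ Datatypes.S (Datatypes.S m)) with (q ^ 2 * q ^ m) in H by (simpl; ring).
    pose proof (Hqp m). nra. }
  pose proof (Hinc _ _ Hcv) as H1.
  pose proof (Hle _ _ Hj1) as H2.
  pose proof (HJ m ltac:(lia)) as H3.
  unfold a in H3. fold c. nra.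
Qed.

Theorem mainTheorem8 :
  forall (lam alpha beta : R),
    0 < lam -> lam < exp (-1) ->
    alpha < 1 -> 1 < beta ->
    lam * exp alpha = alpha -> lam * exp beta = beta ->
  forall (S : R -> R),
    S 0 = beta -> derivable_pt_lim S 0 1 ->
    (forall z, S (beta * z) = lam * exp (S z)) ->
    (forall z w, z < w -> S z < S w) ->
    (forall z, alpha < S z) ->
    (forall y, alpha < y -> exists z, S z = y) ->
  forall (Sinv : R -> R),
    (forall y, alpha < y -> S (Sinv y) = y) ->
    (forall r, 0 < r ->
       lim_at_infty (fun x => Lfrac alpha beta S Sinv r x / x) 0) /\
    (forall r s gamma, 0 < r -> r < s -> 0 < gamma ->
       lim_at_infty
         (fun x => Rpower (Lfrac alpha beta S Sinv s x) gamma
                   / Lfrac alpha beta S Sinv r x) 0).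
Proof.
  intros lam alpha beta Hlam Hlam1 Ha1 Hb Hea Heb S HS0 Hder Heq Hinc Hgt Hsurj Sinv HSinv.
  assert (Hapos : 0 < alpha) by (rewrite <- Hea; pose proof (exp_pos alpha); nra).
  assert (Hle : forall z w, z <= w -> S z <= S w).
  { intros z w [H|H]; [left; auto | right; subst; auto]. }
  assert (Hinvbig : forall M, exists X, forall x, X < x -> alpha < x /\ M < Sinv x).
  { intro M. exists (Rmax alpha (S M)). intros x Hx.
    pose proof (Rmax_l alpha (S M)). pose proof (Rmax_r alpha (S M)).
    split; [lra|]. destruct (Rlt_le_dec M (Sinv x)) as [Hm|Hm]; auto.
    pose proof (Hle _ _ Hm) as Hm2. rewrite HSinv in Hm2 by lra. lra. }
  assert (HSbig : forall Y, exists z0, forall w, z0 < w -> Y < S w).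
  { intro Y. destruct (Hsurj (Rmax Y (alpha + 1))) as [z0 Hz0].
    { pose proof (Rmax_r Y (alpha + 1)). lra. }
    exists z0. intros w Hw. pose proof (Hinc _ _ Hw). pose proof (Rmax_l Y (alpha+1)). lra. }
  assert (HL : forall r x, alpha < x -> Lfrac alpha beta S Sinv r x = S (Rpower beta (- r) * Sinv x)).
  { intros r x Hx. unfold Lfrac, Efrac. destruct (Rle_dec x alpha); [lra|reflexivity]. }
  split.
  - intros r Hr eps He. destruct (growth lam beta S Hlam Hb HS0 Heq Hinc r Hr (eps / 2) ltac:(lra)) as [M1 HM1].
    destruct (Hinvbig M1) as [X HX]. exists X. intros x Hx.
    destruct (HX x Hx) as [Hax Ht]. rewrite HL by auto.
    pose proof (HM1 _ Ht) as H1. rewrite HSinv in H1 by auto.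
    pose proof (Hgt (Rpower beta (- r) * Sinv x)) as H2.
    set (A := S (Rpower beta (- r) * Sinv x)) in *.
    rewrite Rminus_0_r. rewrite Rabs_right.
    2: { left. unfold Rdiv. apply Rmult_lt_0_compat; [lra|apply Rinv_0_lt_compat; lra]. }
    assert (A / x <= eps / 2).
    { apply Rmult_le_reg_r with x; [lra|]. replace (A / x * x) with A by (field; lra). lra. }
    lra.
  - intros r s gamma Hr Hrs Hg eps He.
    assert (Hl0 : ln lam < 0).
    { rewrite <- ln_1. apply ln_increasing; auto.
      pose proof (exp_increasing (-1) 0 ltac:(lra)). rewrite exp_0 in H. lra. }
    destruct (growth lam beta S Hlam Hb HS0 Heq Hinc (s - r) ltac:(lra) (/ (2 * gamma))
      ltac:(apply Rinv_0_lt_compat; lra)) as [M1 HM1].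
    destruct (HSbig (- 2 * ln (eps * lam))) as [z0 Hz0].
    set (P := Rpower beta (- r)).
    assert (HP : 0 < P) by (unfold P, Rpower; apply exp_pos).
    destruct (Hinvbig (Rmax M1 z0 * beta / P)) as [X HX]. exists X. intros x Hx.
    destruct (HX x Hx) as [Hax Ht]. rewrite !HL by auto.
    set (t := Sinv x) in *.
    set (w := P * t / beta).
    assert (Hw : Rmax M1 z0 < w).
    { unfold w. apply Rmult_lt_reg_r with (beta / P).
      { unfold Rdiv; apply Rmult_lt_0_compat; [lra|apply Rinv_0_lt_compat; lra]. }
      replace (P * t / beta * (beta / P)) with t by (field; lra).
      replace (Rmax M1 z0 * (beta / P)) with (Rmax M1 z0 * beta / P) by (field; lra). lra. }
    pose proof (Rmax_l M1 z0). pose proof (Rmax_r M1 z0).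
    set (c := Rpower beta (- (s - r))).
    assert (E1 : Rpower beta (- r) * t = beta * w) by (unfold w, P; field; lra).
    assert (E2 : Rpower beta (- s) * t = beta * (c * w)).
    { unfold w, c, P. replace (- s) with (- (s - r) + - r) by ring.
      rewrite Rpower_plus. field; lra. }
    rewrite E1, E2, !Heq. fold c in HM1.
    pose proof (HM1 w ltac:(lra)) as H1.
    pose proof (Hz0 w ltac:(lra)) as H2.
    set (A := S (c * w)) in *. set (B := S w) in *.
    unfold Rpower at 1. rewrite ln_mult by (auto; apply exp_pos). rewrite ln_exp.
    rewrite Rminus_0_r. rewrite Rabs_right.
    2: { left. unfold Rdiv. apply Rmult_lt_0_compat; [apply exp_pos|].
         apply Rinv_0_lt_compat. pose proof (exp_pos B). nra. }
    assert (HgA : gamma * A <= B / 2).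
    { replace (B / 2) with (gamma * (/ (2 * gamma) * B)) by (field; lra).
      apply Rmult_le_compat_l; lra. }
    assert (Hexp : exp (gamma * (ln lam + A)) <= exp (gamma * A - B) * exp B).
    { rewrite <- exp_plus. replace (gamma * A - B + B) with (gamma * A) by ring.
      left. apply exp_increasing. nra. }
    assert (H3 : exp (gamma * A - B) < eps * lam).
    { apply Rle_lt_trans with (exp (- B / 2)).
      { destruct (Req_dec (gamma * A - B) (- B / 2)) as [Heq'|Hne].
        - rewrite Heq'. lra.
        - left. apply exp_increasing. lra. }
      rewrite <- (exp_ln (eps * lam)) by nra. apply exp_increasing. lra. }
    pose proof (exp_pos B).
    apply Rmult_lt_reg_r with (lam * exp B); [nra|].
    replace (exp (gamma * (ln lam + A)) / (lam * exp B) * (lam * exp B))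
      with (exp (gamma * (ln lam + A))) by (field; split; lra).
    nra.
Qed.
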